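(* Let $G$ be a graph, let $\mathcal P$ be a partition of $A\subseteq V(G)$ and $\mathcal P'$ a partition of $A'\subseteq V(G)$. If $d(A,A')\ne 0$ then $$\mathcal H(\mathcal P,\mathcal P')-\mathcal H(\{A\},\{A'\})\ge \frac12\, d(A,A')\Bigg(\sum_{V\in\mathcal P,\ V'\in\mathcal P'}\frac{|V||V'|}{|A||A'|}\,\Big|\frac{d(V,V')}{d(A,A')}-1\Big|\Bigg)^2 .$$
   Context: $e(X,Y)$ is the number of ordered pairs $(u,v)\in X\times Y$ with $uv\in E(G)$ and $d(X,Y)=e(X,Y)/(|X||Y|)$. $H(x)=x\ln x$ with $H(0)=0$. For a partition $\mathcal P$ of $A\subseteq V(G)$ and a partition $\mathcal P'$ of $A'\subseteq V(G)$, $$\mathcal H(\mathcal P,\mathcal P')=\sum_{V\in\mathcal P,\,V'\in\mathcal P'}\frac{|V||V'|}{|A||A'|}H(d(V,V')).$$ *)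

(* Defs.v *)
From HB Require Import structures.
From mathcomp Require Import all_boot all_order all_algebra.
From mathcomp Require Import all_classical all_reals all_analysis.
Set Implicit Arguments. Unset Strict Implicit. Unset Printing Implicit Defensive.
Import Order.TTheory GRing.Theory Num.Theory.
Local Open Scope ring_scope.

(* A (finite, simple) graph on vertex type T is given by an adjacency relation
   [adj]; simplicity is imposed as hypotheses in the theorem. *)

Definition edges_between (T : finType) (adj : rel T) (X Y : {set T}) : nat :=
  #|[set p : T * T | [&& p.1 \in X, p.2 \in Y & adj p.1 p.2]]|.

(* d(X,Y) = e(X,Y) / (|X||Y|)  (equal to 0 when X or Y is empty, by the
   MathComp convention x / 0 = 0). *)
Definition density (R : realType) (T : finType) (adj : rel T) (X Y : {set T}) : R :=
  (edges_between adj X Y)%:R / (#|X|%:R * #|Y|%:R).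

Definition Hfun (R : realType) (x : R) : R := if x == 0 then 0 else x * ln x.

Definition calH (R : realType) (T : finType) (adj : rel T)
    (A A' : {set T}) (P P' : {set {set T}}) : R :=
  \sum_(V in P) \sum_(V' in P')
     ((#|V|%:R * #|V'|%:R) / (#|A|%:R * #|A'|%:R)) * Hfun (density R adj V V').

(* Main.v *)
Require Import Defs.
From HB Require Import structures.
From mathcomp Require Import all_boot all_order all_algebra.
From mathcomp Require Import reals.
From mathcomp Require Import all_classical all_reals all_analysis.
From mathcomp Require Import ring lra.
Import Order.TTheory GRing.Theory Num.Theory.
Local Open Scope ring_scope.

Module Aux.
Import numFieldNormedType.Exports.
Local Open Scope classical_set_scope.
Section S.
Variable R : realType.

Definition hh (x : R) := ln x + 4^-1 * x^-1 + (27/4) * (x+2)^-1.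
Lemma hh_der (x : R) : 0 < x -> is_derive x 1 hh (x^-1 - 4^-1 * x^-2 - (27/4) * (x+2)^-2).
Proof.
move=> x0.
have h1 : is_derive x 1 (fun y : R => y^-1) (- x ^- 2 *: (1:R)).
  apply: is_deriveV; rewrite ?gt_eqF //.
have h2 : is_derive x 1 (fun y : R => (y+2)^-1) (- (x+2) ^- 2 *: ((1:R) + 0)).
  apply: is_deriveV; rewrite ?gt_eqF // ?ltr_wpDr // ?ltW //.
have h3 := is_deriveZ (4^-1) h1.
have h4 := is_deriveZ (27/4) h2.
have -> : hh = (@ln R) + (4^-1 : R) \*: (fun y : R => y^-1) + (27/4 : R) \*: (fun y : R => (y+2)^-1).
  by apply/funext => y; rewrite /hh /=.
have := is_deriveD (is_deriveD (is_derive1_ln x0) h3) h4.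
move=> H; apply: (is_derive_eq H).
rewrite /GRing.scale /= addr0 !mulr1. ring.
Qed.

Lemma hh'E (y : R) : 0 < y ->
  y^-1 - 4^-1 * y^-2 - (27/4) * (y+2)^-2 = (y-1)^+3 / (y^+2 * (y+2)^+2).
Proof.
move=> y0; have y2 : y + 2 != 0 by rewrite gt_eqF // ltr_wpDr // ltW.
by field; rewrite y2 gt_eqF.
Qed.

Lemma hh_derivable (y : R) : 0 < y -> derivable hh y 1.
Proof. by move=> y0; have [] := hh_der y y0. Qed.

Lemma hh_d1 (y : R) : 0 < y -> (hh^`())%classic y = (y-1)^+3 / (y^+2 * (y+2)^+2).
Proof. by move=> y0; have := hh_der y y0; rewrite derive1E => -[_ ->]; exact: hh'E. Qed.

Lemma hh_ge (x : R) : 0 < x -> 5/2 <= hh x.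
Proof.
move=> x0.
have h1 : hh 1 = 5/2 by rewrite /hh ln1 invr1; field.
have cont : forall a b : R, 0 < a -> {within `[a, b], continuous hh}.
  move=> a b a0; apply: derivable_within_continuous => y.
  rewrite in_itv /= => /andP[ay _]; apply: hh_derivable _; exact: lt_le_trans ay.
case: (leP 1 x) => x1.
  rewrite -h1; apply: (@ger0_derive1_le_cc _ hh 1 x) => //.
  - move=> y; rewrite in_itv /= => /andP[y1 _]; apply: hh_derivable _; exact: lt_trans y1.
  - move=> y; rewrite in_itv /= => /andP[y1 _].
    have y0 : 0 < y by exact: lt_trans y1.
    rewrite hh_d1 // divr_ge0 // ?exprn_ge0 ?subr_ge0 ?ltW //.
    have y2 : 0 < y + 2 by lra.
    by rewrite mulr_gt0 // exprn_gt0.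
  - by apply: cont.
  - by rewrite in_itv /= lexx x1.
  - by rewrite in_itv /= lexx x1.
rewrite -h1; apply: (@ler0_derive1_le_cc _ hh x 1) => //.
  - move=> y; rewrite in_itv /= => /andP[xy _]; apply: hh_derivable _; exact: lt_trans xy.
  - move=> y; rewrite in_itv /= => /andP[xy y1].
    have y0 : 0 < y by exact: lt_trans xy.
    have y2 : 0 < y + 2 by lra.
    have D : 0 < y^+2 * (y+2)^+2 by rewrite mulr_gt0 // exprn_gt0.
    rewrite hh_d1 // ler_pdivrMr // mul0r.
    rewrite (_ : (y-1)^+3 = - ((1-y)^+3)); last by ring.
    by rewrite oppr_le0 exprn_ge0 // subr_ge0 ltW.
  - by apply: cont.
  - by rewrite in_itv /= lexx ltW.
  - by rewrite in_itv /= lexx ltW.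
  - exact: ltW.
Qed.

Lemma phi_ge (x : R) : 0 <= x ->
  (3/2) * ((x-1)^+2 / (x+2)) <= Hfun x - x + 1.
Proof.
move=> x0; rewrite /Hfun; have x2 : 0 < x + 2 by lra.
have [->|xn0] := eqVneq x 0.
  rewrite !subr0 sub0r expr2 mulN1r opprK mul1r; rewrite ler_pdivrMr; lra.
have xp : 0 < x by rewrite lt_def xn0.
have := hh_ge x xp; rewrite /hh => H.
have H2 : x * (5/2 - 4^-1 * x^-1 - 27/4 * (x+2)^-1) <= x * ln x.
  by rewrite ler_pM2l //; lra.
apply: le_trans (_ : x * (5/2 - 4^-1 * x^-1 - 27/4 * (x+2)^-1) - x + 1 <= _); last by lra.
rewrite le_eqVlt; apply/orP; left; apply/eqP.
by field; rewrite gt_eqF // gt_eqF.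
Qed.

Lemma phi_ge2 (x k : R) : 0 <= x -> 0 < k ->
  (3/2) * (2 * `|x - 1| / k - (x+2) / k^+2) <= Hfun x - x + 1.
Proof.
move=> x0 k0; apply: le_trans (phi_ge x x0); rewrite ler_pM2l; last by lra.
have x2 : 0 < x + 2 by lra.
rewrite -subr_ge0 (_ : _ - _ = (`|x-1| * k - (x+2))^+2 / ((x+2) * k^+2)).
  apply: divr_ge0; first exact: sqr_ge0.
  by apply: mulr_ge0; [exact: ltW | exact: exprn_ge0 (ltW k0)].
rewrite -[(x-1)^+2]real_normK ?num_real //.
by field; rewrite !gt_eqF.
Qed.

Lemma phi_ge0 (x : R) : 0 <= x -> 0 <= Hfun x - x + 1.
Proof.
move=> x0; apply: le_trans (phi_ge x x0); have x2 : 0 < x + 2 by lra.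
by rewrite mulr_ge0 // ?divr_ge0 // ?sqr_ge0 ?ltW //; lra.
Qed.

Lemma pinsker (I : finType) (Pr : pred I) (w x : I -> R) :
  (forall i, Pr i -> 0 <= w i) -> (forall i, Pr i -> 0 <= x i) ->
  \sum_(i | Pr i) w i = 1 -> \sum_(i | Pr i) w i * x i = 1 ->
  2^-1 * (\sum_(i | Pr i) w i * `|x i - 1|)^+2 <= \sum_(i | Pr i) w i * Hfun (x i).
Proof.
move=> w0 x0 sw swx.
have E : \sum_(i | Pr i) w i * Hfun (x i) = \sum_(i | Pr i) w i * (Hfun (x i) - x i + 1).
  under [RHS]eq_bigr do rewrite mulrDr mulrBr mulr1.
  by rewrite big_split /= sumrB swx sw subrK.
rewrite E; set S := \sum_(i | Pr i) _.
have S0 : 0 <= S by apply: sumr_ge0 => i Pi; rewrite mulr_ge0 // w0.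
have [->|Sn0] := eqVneq S 0.
  rewrite expr2 mulr0 mulr0; apply: sumr_ge0 => i Pi.
  by rewrite mulr_ge0 ?w0 ?phi_ge0 ?x0.
have Sp : 0 < S by rewrite lt_def Sn0.
have kp : 0 < 3 / S by rewrite divr_gt0.
apply: le_trans (_ : \sum_(i | Pr i) w i * ((3/2) * (2 * `|x i - 1| / (3/S) - (x i + 2) / (3/S)^+2)) <= _); last first.
  by apply: ler_sum => i Pi; rewrite ler_wpM2l ?w0 // phi_ge2 ?x0 //.
set k := 3 / S.
have kn0 : k != 0 by rewrite gt_eqF.
have -> : \sum_(i | Pr i) w i * ((3/2) * (2 * `|x i - 1| / k - (x i + 2) / k^+2))
   = \sum_(i | Pr i) ((3/k) * (w i * `|x i - 1|) - (3/(2*k^+2)) * (w i * x i) - (3/k^+2) * w i).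
  by apply: eq_bigr => i _; field.
rewrite !sumrB -!mulr_sumr swx sw -/S /k.
rewrite le_eqVlt; apply/orP; left; apply/eqP; field; by rewrite gt_eqF.
Qed.
End S.
End Aux.

Lemma edges_sum (T : finType) (adj : rel T) (X Y : {set T}) :
  edges_between adj X Y = (\sum_(u in X) \sum_(v in Y) (adj u v : nat))%N.
Proof.
rewrite /edges_between -sum1_card.
rewrite (eq_bigl (fun p : T * T => (p.1 \in X) && ((p.2 \in Y) && adj p.1 p.2))); last first.
  by move=> p; rewrite inE.
rewrite -(pair_big_dep (fun u => u \in X) (fun u v => (v \in Y) && adj u v) (fun _ _ => 1%N)) /=.
apply: eq_bigr => u _; rewrite big_mkcondr /=; apply: eq_bigr => v _.
by case: (adj u v).
Qed.

Lemma edges_part (T : finType) (adj : rel T) (A A' : {set T}) (P P' : {set {set T}}) :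
  finset.partition P A -> finset.partition P' A' ->
  edges_between adj A A' = (\sum_(V in P) \sum_(V' in P') edges_between adj V V')%N.
Proof.
move=> /and3P[/eqP cP tP _] /and3P[/eqP cP' tP' _].
rewrite edges_sum -cP finset.big_trivIset //.
apply: eq_bigr => V _.
rewrite (eq_bigr (fun u => \sum_(V' in P') \sum_(v in V') (adj u v : nat))%N); last first.
  by move=> u _; rewrite -cP' finset.big_trivIset.
rewrite exchange_big /=; apply: eq_bigr => V' _; rewrite edges_sum.
done.
Qed.

Lemma Hfun_mul (R : realType) (d x : R) : 0 < d -> 0 <= x ->
  Hfun (d * x) = d * x * ln d + d * Hfun x.
Proof.
move=> d0 x0; rewrite /Hfun.
have [->|xn0] := eqVneq x 0; first by rewrite mulr0 eqxx; ring.
have xp : 0 < x by rewrite lt_def xn0.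
rewrite mulf_eq0 (gt_eqF d0) (negbTE xn0) /= lnM ?posrE //; ring.
Qed.

Lemma density_ge0 (R : realType) (T : finType) (adj : rel T) (X Y : {set T}) :
  0 <= density R adj X Y.
Proof. by rewrite /density divr_ge0 // mulr_ge0. Qed.

Theorem corollary3p3 (R : realType) (T : finType) (adj : rel T)
    (adj_sym : symmetric adj) (adj_irr : irreflexive adj)
    (A A' : {set T}) (P P' : {set {set T}})
    (hP : finset.partition P A) (hP' : finset.partition P' A')
    (hd : density R adj A A' != 0) :
  calH R adj A A' P P' - calH R adj A A' [set A]%SET [set A']%SET >=
  (2%:R)^-1 * density R adj A A' *
  (\sum_(V in P) \sum_(V' in P')
     ((#|V|%:R * #|V'|%:R) / (#|A|%:R * #|A'|%:R)) *
       `|density R adj V V' / density R adj A A' - 1|) ^+ 2.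
Proof.
set d := density R adj A A'.
have d0 : 0 < d by rewrite lt_def hd density_ge0.
have nA0 : (0:R) < #|A|%:R.
  rewrite ltr0n lt0n; apply: contra hd => /eqP h.
  by rewrite /d /density h mul0r invr0 mulr0.
have nA'0 : (0:R) < #|A'|%:R.
  rewrite ltr0n lt0n; apply: contra hd => /eqP h.
  by rewrite /d /density h mulr0 invr0 mulr0.
have Vpos : forall V, V \in P -> (0:R) < #|V|%:R.
  move=> V VP; rewrite ltr0n card_gt0; case/and3P: hP => _ _ s0.
  by apply: contraNneq s0 => <-.
have V'pos : forall V, V \in P' -> (0:R) < #|V|%:R.
  move=> V VP; rewrite ltr0n card_gt0; case/and3P: hP' => _ _ s0.
  by apply: contraNneq s0 => <-.
set w := fun V V' : {set T} => ((#|V|%:R * #|V'|%:R) / (#|A|%:R * #|A'|%:R) : R).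
have PS : forall F : {set T} -> {set T} -> R,
    \sum_(V in P) \sum_(V' in P') F V V' =
    \sum_(p | (p.1 \in P) && (p.2 \in P')) F p.1 p.2.
  by move=> F; rewrite (pair_big_dep (fun V => V \in P) (fun _ V' => V' \in P')).
have sw : \sum_(V in P) \sum_(V' in P') w V V' = 1.
  rewrite /w.
  have -> : \sum_(V in P) \sum_(V' in P') ((#|V|%:R * #|V'|%:R) / (#|A|%:R * #|A'|%:R) : R)
     = (\sum_(V in P) (#|V|%:R / #|A|%:R)) * (\sum_(V' in P') (#|V'|%:R / #|A'|%:R)).
    rewrite big_distrlr /=; apply: eq_bigr => V _; apply: eq_bigr => V' _.
    by rewrite invfM; ring.
  rewrite -!mulr_suml -!natr_sum -(card_partition hP) -(card_partition hP').
  by rewrite !divff ?mulr1 // gt_eqF.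
have swx : \sum_(V in P) \sum_(V' in P') w V V' * (density R adj V V' / d) = 1.
  have -> : \sum_(V in P) \sum_(V' in P') w V V' * (density R adj V V' / d)
      = \sum_(V in P) \sum_(V' in P') ((edges_between adj V V')%:R * ((#|A|%:R * #|A'|%:R)^-1 / d)).
    apply: eq_bigr => V VP; apply: eq_bigr => V' V'P.
    rewrite /w /density; field.
    by rewrite hd (gt_eqF nA0) (gt_eqF nA'0) (gt_eqF (Vpos _ VP)) (gt_eqF (V'pos _ V'P)).
  rewrite (eq_bigr (fun V => (\sum_(V' in P') edges_between adj V V')%:R * ((#|A|%:R * #|A'|%:R)^-1 / d))); last first.
    by move=> V _; rewrite -mulr_suml natr_sum.
  rewrite -mulr_suml -natr_sum -(edges_part _ adj _ _ _ _ hP hP') mulrA.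
  by rewrite -[_ * (_ * _)^-1]/(density R adj A A') -/d divff.
have HA : calH R adj A A' [set A]%SET [set A']%SET = d * ln d.
  rewrite /calH !big_set1 divff ?mul1r; last by rewrite mulf_neq0 // gt_eqF.
  by rewrite /Hfun -/d (negbTE hd).
have HP : calH R adj A A' P P' = d * ln d
     + d * \sum_(V in P) \sum_(V' in P') w V V' * Hfun (density R adj V V' / d).
  rewrite /calH.
  have -> : \sum_(V in P) \sum_(V' in P')
      ((#|V|%:R * #|V'|%:R) / (#|A|%:R * #|A'|%:R)) * Hfun (density R adj V V')
    = \sum_(V in P) \sum_(V' in P') (d * ln d * (w V V' * (density R adj V V' / d))
        + d * (w V V' * Hfun (density R adj V V' / d))).
    apply: eq_bigr => V _; apply: eq_bigr => V' _.
    have -> : Hfun (density R adj V V') = Hfun (d * (density R adj V V' / d)).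
      by rewrite mulrC divfK.
    rewrite Hfun_mul //; last by rewrite divr_ge0 // ?density_ge0 // ltW.
    rewrite /w; ring.
  rewrite (eq_bigr (fun V => \sum_(V' in P') d * ln d * (w V V' * (density R adj V V' / d))
        + \sum_(V' in P') d * (w V V' * Hfun (density R adj V V' / d)))); last first.
    by move=> V _; rewrite big_split.
  rewrite big_split /=.
  rewrite (eq_bigr (fun V => d * ln d * \sum_(V' in P') (w V V' * (density R adj V V' / d)))); last first.
    by move=> V _; rewrite mulr_sumr.
  rewrite -mulr_sumr swx mulr1; congr (_ + _).
  rewrite mulr_sumr; apply: eq_bigr => V _; by rewrite mulr_sumr.
rewrite HP HA addrC addKr [2^-1 * d]mulrC -mulrA ler_pM2l //.
have := @Aux.pinsker R _ (fun p : {set T} * {set T} => (p.1 \in P) && (p.2 \in P'))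
   (fun p => w p.1 p.2) (fun p => density R adj p.1 p.2 / d).
move=> H.
have E1 := PS (fun V V' => w V V' * `|density R adj V V' / d - 1|).
have E2 := PS (fun V V' => w V V' * Hfun (density R adj V V' / d)).
have E3 := PS w.
have E4 := PS (fun V V' => w V V' * (density R adj V V' / d)).
rewrite /= in E1 E2 E4.
rewrite E1 E2; apply: H.
- move=> p /andP[h1 h2]; rewrite /w; apply: divr_ge0.
    by apply: mulr_ge0; apply: ltW; [exact: Vpos | exact: V'pos].
  by apply: ltW; exact: mulr_gt0.
- by move=> p _; rewrite divr_ge0 // ?density_ge0 // ltW.
- by rewrite -E3.
- by rewrite -E4.
Qed.
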